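(* For any two ${\cal X}_5$ formulas $\alpha$ and $\beta$: $\alpha$ and $\beta$ are strongly equivalent on substitutions if and only if $\alpha\Leftrightarrow\beta$ is valid in ${\cal X}_5$.
   Context: Fix a set $\mathit{At}$ of atoms. An explicit literal is $p$ or $\sim p$ for $p\in\mathit{At}$; a set of explicit literals is consistent if it never contains both $p$ and $\sim p$. Formulas: $\varphi ::= p\mid\bot\mid\varphi\wedge\varphi\mid\varphi\vee\varphi\mid\varphi\to\varphi\mid\sim\varphi$; abbreviations $\neg\varphi:=\varphi\to\bot$, $\top:=\neg\bot$, $\varphi\leftrightarrow\psi:=(\varphi\to\psi)\wedge(\psi\to\varphi)$, $\varphi\Leftrightarrow\psi:=(\varphi\leftrightarrow\psi)\wedge(\sim\varphi\leftrightarrow\sim\psi)$. A theory is a set of formulas. $\varphi[\alpha/p]$ denotes the result of replacing every occurrence of atom $p$ in $\varphi$ by $\alpha$. An ${\cal X}_5$-interpretation is a pair $\langle H,T\rangle$ of consistent sets of explicit literals with $H\subseteq T$. Satisfaction $\models$ and falsification $=\!\!|\;$: $\langle H,T\rangle\not\models\bot$, $\langle H,T\rangle=\!\!|\;\bot$; $\models p$ iff $p\in H$, $=\!\!|\;p$ iff $\sim p\in H$; $\models\varphi\wedge\psi$ iff both satisfied, $=\!\!|\;\varphi\wedge\psi$ iff at least one falsified; $\models\varphi\vee\psi$ iff at least one satisfied, $=\!\!|\;\varphi\vee\psi$ iff both falsified; $\models\sim\varphi$ iff $=\!\!|\;\varphi$, $=\!\!|\;\sim\varphi$ iff $\models\varphi$;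 $\langle H,T\rangle\models\varphi\to\psi$ iff (i) $\langle H,T\rangle\not\models\varphi$ or $\langle H,T\rangle\models\psi$ and (ii) $\langle T,T\rangle\not\models\varphi$ or $\langle T,T\rangle\models\psi$; $\langle H,T\rangle=\!\!|\;\varphi\to\psi$ iff $\langle T,T\rangle\models\varphi$ and $\langle H,T\rangle=\!\!|\;\psi$. A formula is valid if satisfied by every ${\cal X}_5$-interpretation. A model of a theory satisfies all its formulas. $\langle T,T\rangle$ is an equilibrium model of $\Gamma$ if it is a model of $\Gamma$ and there is no model $\langle H,T\rangle$ of $\Gamma$ with $H\subsetneq T$. Formulas $\alpha,\beta$ are strongly equivalent on substitutions if for every formula $\varphi$, every atom $p$, and every theory $\Delta$, the theories $\Delta\cup\{\varphi[\alpha/p]\}$ and $\Delta\cup\{\varphi[\beta/p]\}$ have the same equilibrium models. *)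

(* Defs.v *)
(* Nelson-style logic X5 (here-and-there with explicit negation). *)
From Stdlib Require Import ClassicalEpsilon.

Set Implicit Arguments.

Section X5.
Variable At : Type.

Inductive form : Type :=
| Atom : At -> form
| Bot : form
| And : form -> form -> form
| Or : form -> form -> form
| Imp : form -> form -> form
| SNeg : form -> form.

Definition Neg (f : form) : form := Imp f Bot.
Definition Top : form := Neg Bot.
Definition Iff (f g : form) : form := And (Imp f g) (Imp g f).
Definition SIff (f g : form) : form := And (Iff f g) (Iff (SNeg f) (SNeg g)).

Inductive lit : Type := PosL : At -> lit | NegL : At -> lit.

Definition litset := lit -> Prop.

Definition consistent (S : litset) : Prop := forall p, ~ (S (PosL p) /\ S (NegL p)).

Definition subset (S S' : litset) : Prop := forall l, S l -> S' l.

Definition interp (H T : litset) : Prop :=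
  consistent H /\ consistent T /\ subset H T.

Fixpoint sat (H T : litset) (f : form) : Prop :=
  match f with
  | Atom p => H (PosL p)
  | Bot => False
  | And f g => sat H T f /\ sat H T g
  | Or f g => sat H T f \/ sat H T g
  | Imp f g => (sat H T f -> sat H T g) /\ (sat T T f -> sat T T g)
  | SNeg f => fals H T f
  end
with fals (H T : litset) (f : form) : Prop :=
  match f with
  | Atom p => H (NegL p)
  | Bot => True
  | And f g => fals H T f \/ fals H T g
  | Or f g => fals H T f /\ fals H T g
  | Imp f g => sat T T f /\ fals H T g
  | SNeg f => sat H T f
  end.

Definition valid (f : form) : Prop :=
  forall H T, interp H T -> sat H T f.

Definition theory := form -> Prop.

Definition model (H T : litset) (G : theory) : Prop :=
  interp H T /\ forall f, G f -> sat H T f.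

Definition strict_subset (S S' : litset) : Prop :=
  subset S S' /\ ~ subset S' S.

Definition eq_model (T : litset) (G : theory) : Prop :=
  model T T G /\ ~ (exists H, strict_subset H T /\ model H T G).

Fixpoint subst (f : form) (a : form) (p : At) : form :=
  match f with
  | Atom q => if excluded_middle_informative (q = p) then a else Atom q
  | Bot => Bot
  | And f g => And (subst f a p) (subst g a p)
  | Or f g => Or (subst f a p) (subst g a p)
  | Imp f g => Imp (subst f a p) (subst g a p)
  | SNeg f => SNeg (subst f a p)
  end.

Definition add (D : theory) (f : form) : theory := fun g => D g \/ g = f.

Definition se_subst (a b : form) : Prop :=
  forall (phi : form) (p : At) (D : theory) (T : litset),
    eq_model T (add D (subst phi a p)) <-> eq_model T (add D (subst phi b p)).

End X5.

(* Main.v *)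
Require Import Defs.
From Stdlib Require Import Classical ClassicalEpsilon FunctionalExtensionality PropExtensionality.

Section S.
Variable At : Type.

Lemma interp_TT (H T : litset At) : interp H T -> interp T T.
Proof. intros [c1 [c2 s]]. split; [|split]; auto. intros l x; exact x. Qed.

Lemma persist (H T : litset At) (f : form At) : interp H T ->
  (sat H T f -> sat T T f) /\ (fals H T f -> fals T T f).
Proof.
  intros I. destruct I as [c1 [c2 s]].
  induction f as [q| |f IHf g IHg|f IHf g IHg|f IHf g IHg|f IHf]; simpl.
  - split; apply s.
  - tauto.
  - tauto.
  - tauto.
  - split; [tauto|]. intros [x y]. split; tauto.
  - tauto.
Qed.

Definition litf (l : lit At) : form At :=
  match l with PosL p => Atom p | NegL p => SNeg (Atom p) end.

Lemma sat_litf (H T : litset At) l : sat H T (litf l) <-> H l.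
Proof. destruct l; simpl; tauto. Qed.

Lemma se_sat (f g : form At) :
  (forall D T, eq_model T (add D f) <-> eq_model T (add D g)) ->
  forall H T, interp H T -> sat H T f -> sat H T g.
Proof.
  intros SE H T I Hf. apply NNPP; intro Hg.
  destruct (classic (sat T T g)) as [Tg|Tg].
  -
    set (D := fun h : form At => (exists l, H l /\ h = litf l) \/
       (exists l1 l2, T l1 /\ ~ H l1 /\ T l2 /\ ~ H l2 /\ h = Imp (litf l1) (litf l2))).
    assert (NS : ~ subset T H).
    { intro sTH. destruct I as [c1 [c2 s]].
      assert (E : H = T).
      { apply functional_extensionality; intro l; apply propositional_extensionality; split; auto. }
      subst H. contradiction. }
    assert (EG : eq_model T (add D g)).
    { split.
      - split; [exact (interp_TT _ _ I)|].
        intros h [[[l [Hl ->]]|[l1 [l2 [T1 [_ [T2 [_ ->]]]]]]]| ->].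
        + apply sat_litf. destruct I as [_ [_ s]]; auto.
        + simpl. split; intros _; apply (proj2 (sat_litf _ _ _)); auto.
        + exact Tg.
      - intros [H' [[sH' nsH'] [I' M']]].
        assert (HH' : subset H H').
        { intros l Hl. apply (sat_litf H' T l). apply M'. left. left. eauto. }
        apply not_all_ex_not in nsH'. destruct nsH' as [l2 nl2].
        apply imply_to_and in nl2. destruct nl2 as [T2 nH'2].
        destruct (classic (subset H' H)) as [sHH|sHH].
        + assert (E : H' = H).
          { apply functional_extensionality; intro l; apply propositional_extensionality; split; auto. }
          subst H'. apply Hg. apply M'. right. reflexivity.
        + apply not_all_ex_not in sHH. destruct sHH as [l1 nl1].
          apply imply_to_and in nl1. destruct nl1 as [H'1 nH1].
          assert (nH2 : ~ H l2) by auto.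
          assert (Im : sat H' T (Imp (litf l1) (litf l2))).
          { apply M'. left. right. exists l1, l2. repeat split; auto. }
          destruct Im as [Im _]. apply nH'2. apply (proj1 (sat_litf H' T l2)). apply Im. apply (proj2 (sat_litf H' T l1)). auto. }
    destruct (proj2 (SE D T) EG) as [_ NE]. apply NE. exists H. split.
    + split; [destruct I as [_ [_ s]]; exact s| exact NS].
    + split; [exact I|].
      intros h [[[l [Hl ->]]|[l1 [l2 [T1 [nH1 [T2 [_ ->]]]]]]]| ->].
      * apply (proj2 (sat_litf _ _ _)); auto.
      * simpl. split.
        -- intro x. apply sat_litf in x. contradiction.
        -- intros _. apply (proj2 (sat_litf _ _ _)). auto.
      * exact Hf.
  -
    set (D := fun h : form At => exists l, T l /\ h = litf l).
    assert (EG : eq_model T (add D f)).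
    { split.
      - split; [exact (interp_TT _ _ I)|].
        intros h [[l [Tl ->]]| ->].
        + apply (proj2 (sat_litf _ _ _)); auto.
        + apply (persist _ _ f I). exact Hf.
      - intros [H' [[sH' nsH'] [I' M']]]. apply nsH'. intros l Tl.
        apply (proj1 (sat_litf H' T l)). apply M'. left. exists l; split; auto. }
    destruct (proj1 (SE D T) EG) as [[_ M] _]. apply Tg. apply M. right. reflexivity.
Qed.

Lemma subst_equiv (a b : form At) (p : At) :
  (forall H T, interp H T -> (sat H T a <-> sat H T b) /\ (fals H T a <-> fals H T b)) ->
  forall phi H T, interp H T ->
   (sat H T (subst phi a p) <-> sat H T (subst phi b p)) /\
   (fals H T (subst phi a p) <-> fals H T (subst phi b p)).
Proof.
  intros E phi. induction phi as [q| |f IHf g IHg|f IHf g IHg|f IHf g IHg|f IHf];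
    intros H T I; simpl.
  - destruct (excluded_middle_informative (q = p)); simpl; [apply E; auto| tauto].
  - tauto.
  - destruct (IHf H T I); destruct (IHg H T I); tauto.
  - destruct (IHf H T I); destruct (IHg H T I); tauto.
  - pose proof (interp_TT _ _ I) as I2.
    destruct (IHf H T I); destruct (IHg H T I); destruct (IHf T T I2); destruct (IHg T T I2); tauto.
  - destruct (IHf H T I); tauto.
Qed.
End S.

Theorem theorem10 (At : Type) (inhab : inhabited At) (a b : form At) :
  se_subst a b <-> valid (SIff a b).
Proof.
  split.
  - intros SE. destruct inhab as [p].
    assert (Ea : forall D T, eq_model T (add D a) <-> eq_model T (add D b)).
    { intros D T. pose proof (SE (Atom p) p D T) as X. simpl in X.
      destruct (excluded_middle_informative (p = p)); [exact X| congruence]. }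
    assert (En : forall D T, eq_model T (add D (SNeg a)) <-> eq_model T (add D (SNeg b))).
    { intros D T. pose proof (SE (SNeg (Atom p)) p D T) as X. simpl in X.
      destruct (excluded_middle_informative (p = p)); [exact X| congruence]. }
    assert (S1 : forall H T, interp H T -> (sat H T a <-> sat H T b)).
    { intros H T I. split; apply se_sat; auto. intros D T'. symmetry. apply Ea. }
    assert (S2 : forall H T, interp H T -> (fals H T a <-> fals H T b)).
    { intros H T I. split; intro x.
      - apply (se_sat _ (SNeg a) (SNeg b) En H T I x).
      - apply (se_sat _ (SNeg b) (SNeg a)); auto. intros D T'. symmetry. apply En. }
    intros H T I. pose proof (interp_TT _ _ _ I) as I2.
    unfold SIff, Iff; simpl.
    pose proof (S1 H T I); pose proof (S1 T T I2); pose proof (S2 H T I); pose proof (S2 T T I2).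
    tauto.
  - intros V phi p D T.
    assert (E : forall H T, interp H T -> (sat H T a <-> sat H T b) /\ (fals H T a <-> fals H T b)).
    { intros H T' I. pose proof (V H T' I) as X. unfold SIff, Iff in X; simpl in X. tauto. }
    assert (M : forall H, model H T (add D (subst phi a p)) <-> model H T (add D (subst phi b p))).
    { intros H. unfold model, add. split; intros [I Mo]; split; auto;
      destruct (subst_equiv _ a b p E phi H T I) as [X _];
      intros f [Df| ->]; auto.
      - apply X. apply Mo. auto.
      - apply X. apply Mo. auto. }
    unfold eq_model. rewrite (M T).
    split; intros [m n]; split; auto; intros [H [s mm]]; apply n; exists H; split; auto; apply M; auto.
Qed.
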